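(* Let $S$ be a Stone relation algebra, and let $C : S\to\mathbb{N}\cup\{\infty\}$ map each $x$ to the number of atoms $a\in S$ with $a\sqsubseteq x$. Then $C$ satisfies: (C1a) $C(\bot)=0$; (C2a) $C(x)=1$ for every atom $x$; (C3) $C(x^{\smile})=C(x)$ for all $x$; (C4a) $C(x)+C(y)=C(x\sqcup y)+C(x\sqcap y)$ for all $x,y$; (C4b) $x\sqsubseteq y$ implies $C(x)\le C(y)$. If moreover $S$ is atomic, then $C$ also satisfies: (C1b) $C(x)=0\iff x=\bot$; (C5a) $C(x^{\smile}y\sqcap z)\le C(xz\sqcap y)$ for all $y,z$ and all univalent $x$; (C5b) $C(x\sqcap yz^{\smile})\le C(xz\sqcap y)$ for all $y,z$ and all univalent $x$; (C5c) $C(yx)\le C(y)$ for all $y$ and all univalent $x$; (C5d) $C(x\sqcap y\top)\le C(y)$ for all $y$ and all univalent $x$; (C5e) $C(x\sqcap yy^{\smile})\le C(y)$ for all $y$ and all univalent $x$; (C6a) $C(1\sqcap xx^{\smile})\le C(x)$ for all $x$; (C6b) $C(1\sqcap x^{\smile}x)\le C(x)$ for all $x$.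
   Context: A Stone relation algebra is a structure $(S,\sqcup,\sqcap,\cdot,\overline{\,\cdot\,},{}^{\smile},\bot,\top,1)$ (write $xy$ for $x\cdot y$, $\overline{x}$ for the pseudocomplement, $x^{\smile}$ for the converse) such that: $(S,\sqcup,\sqcap,\bot,\top)$ is a bounded distributive lattice with order $x\sqsubseteq y\iff x\sqcup y=y$; $x\sqcap y=\bot\iff x\sqsubseteq\overline{y}$; $\overline{x}\sqcup\overline{\overline{x}}=\top$; $\cdot$ is associative with two-sided unit $1$, distributes over $\sqcup$ on both sides, and $\bot$ is a zero of $\cdot$; $x^{\smile\smile}=x$, $(xy)^{\smile}=y^{\smile}x^{\smile}$, $(x\sqcup y)^{\smile}=x^{\smile}\sqcup y^{\smile}$; $\overline{\overline{1}}=1$; $\overline{\overline{xy}}=\overline{\overline{x}}\,\overline{\overline{y}}$; $xy\sqcap z\sqsubseteq x(y\sqcap x^{\smile}z)$. An atom is an element $x\neq\bot$ such that $\bot\neq y\sqsubseteq x$ implies $y=x$. $S$ is atomic if every $x\neq\bot$ has an atom below it. $x$ is univalent if $x^{\smile}x\sqsubseteq 1$. Arithmetic in $\mathbb{N}\cup\{\infty\}$ is the usual one with $n+\infty=\infty+n=\infty$ and $n\le\infty$. *)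

(* Defs.v *)
From Stdlib Require Import List.
Import ListNotations.

Record StoneRA : Type := {
  car : Type;
  sup : car -> car -> car;
  meet : car -> car -> car;
  comp : car -> car -> car;
  npc : car -> car;          (* pseudocomplement  \overline{x} *)
  conv : car -> car;
  bot : car;
  top : car;
  one : car;
  sup_assoc : forall x y z, sup x (sup y z) = sup (sup x y) z;
  sup_comm : forall x y, sup x y = sup y x;
  meet_assoc : forall x y z, meet x (meet y z) = meet (meet x y) z;
  meet_comm : forall x y, meet x y = meet y x;
  sup_absorb : forall x y, sup x (meet x y) = x;
  meet_absorb : forall x y, meet x (sup x y) = x;
  meet_sup_distr : forall x y z, meet x (sup y z) = sup (meet x y) (meet x z);
  sup_bot : forall x, sup x bot = x;
  meet_top : forall x, meet x top = x;
  pseudocompl : forall x y, meet x y = bot <-> sup x (npc y) = npc y;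
  stone : forall x, sup (npc x) (npc (npc x)) = top;
  comp_assoc : forall x y z, comp x (comp y z) = comp (comp x y) z;
  comp_one_l : forall x, comp one x = x;
  comp_one_r : forall x, comp x one = x;
  comp_sup_distr_l : forall x y z, comp x (sup y z) = sup (comp x y) (comp x z);
  comp_sup_distr_r : forall x y z, comp (sup x y) z = sup (comp x z) (comp y z);
  comp_bot_l : forall x, comp bot x = bot;
  comp_bot_r : forall x, comp x bot = bot;
  conv_invol : forall x, conv (conv x) = x;
  conv_comp : forall x y, conv (comp x y) = comp (conv y) (conv x);
  conv_sup : forall x y, conv (sup x y) = sup (conv x) (conv y);
  npc_npc_one : npc (npc one) = one;
  npc_npc_comp : forall x y, npc (npc (comp x y)) = comp (npc (npc x)) (npc (npc y));
  dedekind : forall x y z,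
    sup (meet (comp x y) z) (comp x (meet y (comp (conv x) z)))
    = comp x (meet y (comp (conv x) z))
}.

Section Defs.
Variable S : StoneRA.

Definition le (x y : car S) : Prop := sup S x y = y.

Definition atom (x : car S) : Prop :=
  x <> bot S /\ forall y, y <> bot S -> le y x -> y = x.

Definition atomic : Prop :=
  forall x, x <> bot S -> exists a, atom a /\ le a x.

Definition univalent (x : car S) : Prop := le (comp S (conv S x) x) (one S).

End Defs.

Inductive enat : Type := Fin (n : nat) | Inf.

Definition eadd (a b : enat) : enat :=
  match a, b with
  | Fin m, Fin n => Fin (m + n)
  | _, _ => Inf
  end.

Definition ele (a b : enat) : Prop :=
  match a, b with
  | _, Inf => True
  | Inf, Fin _ => False
  | Fin m, Fin n => m <= n
  end.

Definition atom_count (S : StoneRA) (x : car S) (c : enat) : Prop :=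
  match c with
  | Fin n => exists l : list (car S),
      NoDup l /\ (forall a, In a l <-> (atom S a /\ le S a x)) /\ length l = n
  | Inf => ~ exists l : list (car S), forall a, atom S a -> le S a x -> In a l
  end.

(* Main.v *)
Require Import Defs.
From Stdlib Require Import List Lia Classical ClassicalEpsilon.
Import ListNotations.

Definition cnt {T : Type} (P : T -> Prop) (c : enat) : Prop :=
  match c with
  | Fin n => exists l : list T, NoDup l /\ (forall a, In a l <-> P a) /\ length l = n
  | Inf => ~ exists l : list T, forall a, P a -> In a l
  end.

Lemma ac_cnt (S : StoneRA) x c : atom_count S x c -> cnt (fun a => atom S a /\ le S a x) c.
Proof.
  destruct c; simpl; auto.
  intros H [l Hl]. apply H. exists l. intros a H1 H2. apply Hl. auto.
Qed.

Lemma cnt_unique {T} (P : T -> Prop) c1 c2 : cnt P c1 -> cnt P c2 -> c1 = c2.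
Proof.
  destruct c1 as [n|], c2 as [m|]; simpl; auto.
  - intros [l1 [N1 [I1 L1]]] [l2 [N2 [I2 L2]]].
    f_equal. subst.
    assert (length l1 <= length l2) by (apply NoDup_incl_length; auto; intros a Ha; apply I2, I1, Ha).
    assert (length l2 <= length l1) by (apply NoDup_incl_length; auto; intros a Ha; apply I1, I2, Ha).
    lia.
  - intros [l1 [N1 [I1 L1]]] H. exfalso. apply H. exists l1. intros a Ha. apply I1, Ha.
  - intros H [l1 [N1 [I1 L1]]]. exfalso. apply H. exists l1. intros a Ha. apply I1, Ha.
Qed.

Lemma cnt_ext {T} (P Q : T -> Prop) c : (forall a, P a <-> Q a) -> cnt P c -> cnt Q c.
Proof.
  intros E. destruct c; simpl.
  - intros [l [N [I L]]]. exists l. repeat split; auto; intros; [apply E, I | apply I, E]; auto.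
  - intros H [l Hl]. apply H. exists l. intros a Ha. apply Hl, E, Ha.
Qed.

Lemma ele_trans a b c : ele a b -> ele b c -> ele a c.
Proof. destruct a, b, c; simpl; auto; try lia; tauto. Qed.

Lemma ele_antisym a b : ele a b -> ele b a -> a = b.
Proof. destruct a, b; simpl; auto; try tauto. intros; f_equal; lia. Qed.

Lemma cnt_map {T} (P Q : T -> Prop) (f : T -> T) c1 c2 :
  (forall a, P a -> Q (f a)) ->
  (forall a a', P a -> P a' -> f a = f a' -> a = a') ->
  cnt P c1 -> cnt Q c2 -> ele c1 c2.
Proof.
  intros HQ Hinj. destruct c2 as [m|]; [|destruct c1; simpl; auto].
  intros H1 [lq [Nq [Iq Lq]]]. destruct c1 as [n|]; simpl.
  - destruct H1 as [lp [Np [Ip Lp]]]. subst.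
    rewrite <- (length_map f lp). apply NoDup_incl_length.
    + apply NoDup_map_NoDup_ForallPairs; auto.
      intros a b Ha Hb. apply Hinj; apply Ip; auto.
    + intros b Hb. apply in_map_iff in Hb. destruct Hb as [a [<- Ha]].
      apply Iq, HQ, Ip, Ha.
  - apply H1.
    assert (Hc : forall lq', exists l, forall a, P a -> In (f a) lq' -> In a l).
    { induction lq' as [|b lq' IH].
      - exists nil. simpl. tauto.
      - destruct IH as [l Hl].
        destruct (classic (exists a, P a /\ f a = b)) as [[a0 [Pa0 Fa0]]|Hn].
        + exists (a0 :: l). intros a Pa [E|E].
          * left. apply Hinj; auto. congruence.
          * right. auto.
        + exists l. intros a Pa [E|E]; auto. exfalso. apply Hn. eauto. }
    destruct (Hc lq) as [l Hl]. exists l. intros a Pa. apply Hl; auto. apply Iq, HQ, Pa.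
Qed.

Lemma cnt_rel {T} (t0 : T) (P Q : T -> Prop) (R : T -> T -> Prop) c1 c2 :
  (forall a, P a -> exists b, Q b /\ R a b) ->
  (forall a a' b, P a -> P a' -> R a b -> R a' b -> a = a') ->
  cnt P c1 -> cnt Q c2 -> ele c1 c2.
Proof.
  intros HQ Hinj.
  set (f := fun a => epsilon (inhabits t0) (fun b => Q b /\ R a b)).
  assert (Hf : forall a, P a -> Q (f a) /\ R a (f a)).
  { intros a Pa. unfold f. apply epsilon_spec. auto. }
  apply cnt_map with (f := f).
  - intros a Pa. apply Hf, Pa.
  - intros a a' Pa Pa' E. apply Hinj with (b := f a); auto.
    + apply Hf, Pa.
    + rewrite E. apply Hf, Pa'.
Qed.

Lemma partition {T} (R : T -> Prop) (l : list T) : NoDup l ->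
  exists l1 l2, NoDup l1 /\ NoDup l2 /\ (forall a, In a l1 <-> In a l /\ R a) /\
    (forall a, In a l2 <-> In a l /\ ~ R a) /\ length l1 + length l2 = length l.
Proof.
  induction l as [|x l IH]; intros N.
  - exists nil, nil. simpl. intuition.
  - apply NoDup_cons_iff in N. destruct N as [Nx N].
    destruct (IH N) as [l1 [l2 [N1 [N2 [I1 [I2 L]]]]]].
    destruct (classic (R x)) as [Rx|Rx].
    + exists (x :: l1), l2. refine (conj _ (conj _ (conj _ (conj _ _)))).
      * constructor; auto. intro H. apply Nx, I1, H.
      * auto.
      * intros a; split.
        -- intros [E|E]; [subst; split; [left|]; auto | apply I1 in E; simpl; tauto].
        -- intros [[E|E] Ra]; [subst; left; auto | right; apply I1; auto].
      * intros a; split.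
        -- intros H; apply I2 in H; simpl; split; [tauto|]. intro. destruct H as [H1 H2].
           apply H2; auto.
        -- intros [[E|E] Ra]; [subst; tauto | apply I2; auto].
      * simpl. lia.
    + exists l1, (x :: l2). refine (conj _ (conj _ (conj _ (conj _ _)))).
      * auto.
      * constructor; auto. intro H. apply Nx, I2, H.
      * intros a; split.
        -- intros H; apply I1 in H; simpl; tauto.
        -- intros [[E|E] Ra]; [subst; tauto | apply I1; auto].
      * intros a; split.
        -- intros [E|E]; [subst; split; [left|]; auto | apply I2 in E; simpl; tauto].
        -- intros [[E|E] Ra]; [subst; left; auto | right; apply I2; auto].
      * simpl. lia.
Qed.

Lemma cnt_union {T} (P Q : T -> Prop) cp cq cu ci :
  cnt P cp -> cnt Q cq -> cnt (fun a => P a \/ Q a) cu -> cnt (fun a => P a /\ Q a) ci ->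
  eadd cp cq = eadd cu ci.
Proof.
  intros HP HQ HU HI.
  destruct cp as [n|]; [destruct cq as [m|]|].
  - destruct HP as [lp [Np [Ip Lp]]]. destruct HQ as [lq [Nq [Iq Lq]]].
    destruct (partition P lq Nq) as [l1 [l2 [N1 [N2 [I1 [I2 L]]]]]].
    assert (HU' : cnt (fun a => P a \/ Q a) (Fin (length (lp ++ l2)))).
    { exists (lp ++ l2). repeat split; auto.
      - apply NoDup_app; auto. intros a Ha Hb. apply I2 in Hb. apply Hb, Ip, Ha.
      - intros H. apply in_app_or in H. destruct H as [H|H].
        + left. apply Ip, H.
        + right. apply Iq, I2, H.
      - intros [H|H]; apply in_or_app.
        + left. apply Ip, H.
        + destruct (classic (P a)); [left; apply Ip; auto | right; apply I2; split; auto; apply Iq; auto]. }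
    assert (HI' : cnt (fun a => P a /\ Q a) (Fin (length l1))).
    { exists l1. repeat split; auto.
      - apply I1 in H. tauto.
      - apply Iq. apply I1 in H. tauto.
      - intros [H1 H2]. apply I1. split; auto. apply Iq; auto. }
    rewrite (cnt_unique _ _ _ HU HU'), (cnt_unique _ _ _ HI HI').
    simpl. rewrite length_app. f_equal. lia.
  - assert (cu = Inf).
    { destruct cu as [k|]; auto. exfalso. destruct HU as [l [_ [I _]]].
      apply HQ. exists l. intros a Ha. apply I. auto. }
    subst. destruct ci; reflexivity.
  - assert (cu = Inf).
    { destruct cu as [k|]; auto. exfalso. destruct HU as [l [_ [I _]]].
      apply HP. exists l. intros a Ha. apply I. auto. }
    subst. destruct ci; reflexivity.
Qed.


Section A.
Variable S : StoneRA.
Notation sup := (sup S). Notation meet := (meet S). Notation comp := (comp S).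
Notation conv := (conv S). Notation bot := (bot S). Notation top := (top S).
Notation one := (one S). Notation le := (le S).

Lemma sup_idem x : sup x x = x.
Proof. pose proof (sup_absorb S x (sup x x)) as H. rewrite meet_absorb in H. exact H. Qed.
Lemma meet_idem x : meet x x = x.
Proof. pose proof (meet_absorb S x x) as H. rewrite sup_idem in H. exact H. Qed.
Lemma le_refl x : le x x.
Proof. apply sup_idem. Qed.
Lemma le_trans x y z : le x y -> le y z -> le x z.
Proof. unfold Defs.le. intros H1 H2. rewrite <- H2, sup_assoc, H1. reflexivity. Qed.
Lemma le_antisym x y : le x y -> le y x -> x = y.
Proof. unfold Defs.le. intros H1 H2. rewrite <- H1. rewrite sup_comm. symmetry. exact H2. Qed.
Lemma le_meet_iff x y : le x y <-> meet x y = x.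
Proof.
  unfold Defs.le. split; intro H.
  - rewrite <- H. apply meet_absorb.
  - rewrite <- H. rewrite sup_comm, meet_comm. apply sup_absorb.
Qed.
Lemma meet_lb_l x y : le (meet x y) x.
Proof. apply le_meet_iff. rewrite meet_comm, meet_assoc, meet_idem. reflexivity. Qed.
Lemma meet_lb_r x y : le (meet x y) y.
Proof. rewrite meet_comm. apply meet_lb_l. Qed.
Lemma meet_glb x y z : le z x -> le z y -> le z (meet x y).
Proof.
  rewrite !le_meet_iff. intros H1 H2. rewrite meet_assoc, H1, H2. reflexivity.
Qed.
Lemma bot_le x : le bot x.
Proof. unfold Defs.le. rewrite sup_comm. apply sup_bot. Qed.
Lemma le_top x : le x top.
Proof. apply le_meet_iff, meet_top. Qed.
Lemma le_bot_eq x : le x bot -> x = bot.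
Proof. unfold Defs.le. rewrite sup_bot. auto. Qed.
Lemma comp_mono_l z x y : le x y -> le (comp z x) (comp z y).
Proof. unfold Defs.le. intro H. rewrite <- comp_sup_distr_l, H. reflexivity. Qed.
Lemma comp_mono_r z x y : le x y -> le (comp x z) (comp y z).
Proof. unfold Defs.le. intro H. rewrite <- comp_sup_distr_r, H. reflexivity. Qed.
Lemma conv_mono x y : le x y -> le (conv x) (conv y).
Proof. unfold Defs.le. intro H. rewrite <- conv_sup, H. reflexivity. Qed.
Lemma conv_bot : conv bot = bot.
Proof.
  apply le_bot_eq. pose proof (conv_mono _ _ (bot_le (conv bot))) as H.
  rewrite conv_invol in H. exact H.
Qed.
Lemma conv_meet x y : conv (meet x y) = meet (conv x) (conv y).
Proof.
  apply le_antisym.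
  - apply meet_glb; apply conv_mono; [apply meet_lb_l | apply meet_lb_r].
  - rewrite <- (conv_invol S (meet (conv x) (conv y))). apply conv_mono.
    apply meet_glb.
    + pose proof (conv_mono _ _ (meet_lb_l (conv x) (conv y))) as H.
      rewrite conv_invol in H. exact H.
    + pose proof (conv_mono _ _ (meet_lb_r (conv x) (conv y))) as H.
      rewrite conv_invol in H. exact H.
Qed.
Lemma conv_one : conv one = one.
Proof.
  transitivity (comp (conv one) (conv (conv one))).
  - rewrite conv_invol, comp_one_r. reflexivity.
  - rewrite <- conv_comp, comp_one_r, conv_invol. reflexivity.
Qed.
Lemma conv_top : conv top = top.
Proof.
  apply le_antisym; [apply le_top|].
  pose proof (conv_mono _ _ (le_top (conv top))) as H. rewrite conv_invol in H. exact H.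
Qed.
Lemma ded1 x y z : le (meet (comp x y) z) (comp x (meet y (comp (conv x) z))).
Proof. exact (dedekind S x y z). Qed.
Lemma ded2 x y z : le (meet (comp x y) z) (comp (meet x (comp z (conv y))) y).
Proof.
  pose proof (conv_mono _ _ (ded1 (conv y) (conv x) (conv z))) as H.
  repeat rewrite ?conv_meet, ?conv_comp, ?conv_invol in H. exact H.
Qed.
Lemma ded1_nb x y b : le b (comp x y) -> b <> bot -> meet y (comp (conv x) b) <> bot.
Proof.
  intros Hle Hb Hm. apply Hb, le_bot_eq.
  eapply le_trans; [apply (meet_glb _ _ _ Hle (le_refl b))|].
  eapply le_trans; [apply ded1|]. rewrite Hm, comp_bot_r. apply le_refl.
Qed.
Lemma ded2_nb x y b : le b (comp x y) -> b <> bot -> meet x (comp b (conv y)) <> bot.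
Proof.
  intros Hle Hb Hm. apply Hb, le_bot_eq.
  eapply le_trans; [apply (meet_glb _ _ _ Hle (le_refl b))|].
  eapply le_trans; [apply ded2|]. rewrite Hm, comp_bot_l. apply le_refl.
Qed.

Lemma atom_nb a : atom S a -> a <> bot.
Proof. intros [H _]. exact H. Qed.
Lemma atom_meet_le a w : atom S a -> meet a w <> bot -> le a w.
Proof.
  intros [_ Ha] H. apply le_meet_iff. apply Ha; auto. apply meet_lb_l.
Qed.
Lemma atom_meet_eq a b : atom S a -> atom S b -> meet a b <> bot -> a = b.
Proof.
  intros Ha Hb H. apply le_antisym.
  - apply atom_meet_le; auto.
  - apply atom_meet_le; auto. rewrite meet_comm. auto.
Qed.
Lemma atom_le_sup a x y : atom S a -> le a (sup x y) -> le a x \/ le a y.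
Proof.
  intros Ha H. apply le_meet_iff in H. rewrite meet_sup_distr in H.
  destruct (classic (meet a x = bot)) as [E|E].
  - right. apply le_meet_iff. rewrite E, sup_comm, sup_bot in H. exact H.
  - left. apply atom_meet_le; auto.
Qed.
Lemma atom_conv a : atom S a -> atom S (conv a).
Proof.
  intros [Hnb Ha]. split.
  - intro E. apply Hnb. rewrite <- (conv_invol S a), E. apply conv_bot.
  - intros y Hy Hle. rewrite <- (conv_invol S y). f_equal.
    apply Ha.
    + intro E. apply Hy. rewrite <- (conv_invol S y), E. apply conv_bot.
    + pose proof (conv_mono _ _ Hle) as H. rewrite conv_invol in H. exact H.
Qed.
Lemma le_comp_univ x a b : univalent S x -> le b (comp x a) -> le (comp (conv x) b) a.
Proof.
  intros Hu H. eapply le_trans; [apply (comp_mono_l _ _ _ H)|].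
  rewrite comp_assoc. eapply le_trans; [apply (comp_mono_r _ _ _ Hu)|].
  rewrite comp_one_l. apply le_refl.
Qed.
Lemma sup_ub_l x y : le x (sup x y).
Proof. unfold Defs.le. rewrite sup_assoc, sup_idem. reflexivity. Qed.
Lemma sup_ub_r x y : le y (sup x y).
Proof. unfold Defs.le. rewrite (sup_comm S x y), sup_assoc, sup_idem. reflexivity. Qed.
End A.

Theorem mainTheorem2 (S : StoneRA) (C : car S -> enat)
  (HC : forall x, atom_count S x (C x)) :
  (* (C1a) *) C (bot S) = Fin 0 /\
  (* (C2a) *) (forall x, atom S x -> C x = Fin 1) /\
  (* (C3)  *) (forall x, C (conv S x) = C x) /\
  (* (C4a) *) (forall x y, eadd (C x) (C y) = eadd (C (sup S x y)) (C (meet S x y))) /\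
  (* (C4b) *) (forall x y, le S x y -> ele (C x) (C y)) /\
  (atomic S ->
    (* (C1b) *) (forall x, C x = Fin 0 <-> x = bot S) /\
    (* (C5a) *) (forall x y z, univalent S x ->
        ele (C (meet S (comp S (conv S x) y) z)) (C (meet S (comp S x z) y))) /\
    (* (C5b) *) (forall x y z, univalent S x ->
        ele (C (meet S x (comp S y (conv S z)))) (C (meet S (comp S x z) y))) /\
    (* (C5c) *) (forall x y, univalent S x -> ele (C (comp S y x)) (C y)) /\
    (* (C5d) *) (forall x y, univalent S x -> ele (C (meet S x (comp S y (top S)))) (C y)) /\
    (* (C5e) *) (forall x y, univalent S x ->
        ele (C (meet S x (comp S y (conv S y)))) (C y)) /\
    (* (C6a) *) (forall x, ele (C (meet S (one S) (comp S x (conv S x)))) (C x)) /\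
    (* (C6b) *) (forall x, ele (C (meet S (one S) (comp S (conv S x) x))) (C x))).

Proof.
  assert (H : forall x, cnt (fun a => atom S a /\ le S a x) (C x)) by (intro x; apply ac_cnt, HC).
  clear HC.
  assert (ele_refl : forall a, ele a a) by (intros [|]; simpl; auto).
  assert (Hmono : forall x y, le S x y -> ele (C x) (C y)).
  { intros x y Hxy. eapply (cnt_map _ _ (fun a => a)); [| | apply H | apply H].
    - intros a [Ha Hle]. split; auto. eapply le_trans; eauto.
    - auto. }
  assert (Hc1 : forall x, ele (C x) (C (conv S x))).
  { intros x. eapply (cnt_map _ _ (conv S)); [| | apply H | apply H].
    - intros a [Ha Hle]. split; [apply atom_conv; auto | apply conv_mono; auto].
    - intros a a' _ _ E. rewrite <- (conv_invol S a), E. apply conv_invol. }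
  assert (C3 : forall x, C (conv S x) = C x).
  { intros x. apply ele_antisym; auto. pose proof (Hc1 (conv S x)) as K.
    rewrite conv_invol in K. exact K. }
  assert (C1a : C (bot S) = Fin 0).
  { apply (cnt_unique (fun a => atom S a /\ le S a (bot S))); [apply H|].
    exists nil. split; [constructor|split; auto].
    intros a; split; [intros []|]. intros [Ha Hle]. apply le_bot_eq in Hle.
    exfalso. apply (atom_nb S a Ha Hle). }
  assert (C5a : atomic S -> forall x y z, univalent S x ->
        ele (C (meet S (comp S (conv S x) y) z)) (C (meet S (comp S x z) y))).
  { intros Hat x y z Hu.
    eapply (cnt_rel (bot S) _ _ (fun a b => atom S b /\ le S b (comp S x a)));
      [| | apply H | apply H].
    - intros a [Ha Hle].
      assert (Hl1 : le S a (comp S (conv S x) y)) by (eapply le_trans; [exact Hle| apply meet_lb_l]).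
      assert (Hl2 : le S a z) by (eapply le_trans; [exact Hle| apply meet_lb_r]).
      pose proof (ded1_nb S (conv S x) y a Hl1 (atom_nb S a Ha)) as Hn.
      rewrite conv_invol in Hn.
      destruct (Hat _ Hn) as [b [Hb Hbl]]. exists b. split; split; auto.
      + apply meet_glb.
        * eapply le_trans; [exact Hbl|]. eapply le_trans; [apply meet_lb_r|].
          apply comp_mono_l; auto.
        * eapply le_trans; [exact Hbl| apply meet_lb_l].
      + eapply le_trans; [exact Hbl| apply meet_lb_r].
    - intros a a' b [Ha _] [Ha' _] [Hb Hba] [_ Hba'].
      pose proof (ded1_nb S x a b Hba (atom_nb S b Hb)) as Hn.
      pose proof (le_comp_univ S x a' b Hu Hba') as L2.
      apply atom_meet_eq; auto. intro E. apply Hn. apply le_bot_eq. rewrite <- E.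
      apply meet_glb; [apply meet_lb_l| eapply le_trans; [apply meet_lb_r| apply L2]]. }
  assert (C5b : atomic S -> forall x y z, univalent S x ->
        ele (C (meet S x (comp S y (conv S z)))) (C (meet S (comp S x z) y))).
  { intros Hat x y z Hu.
    eapply (cnt_rel (bot S) _ _ (fun a b => atom S b /\ le S b (comp S a z)));
      [| | apply H | apply H].
    - intros a [Ha Hle].
      assert (Hx : le S a x) by (eapply le_trans; [exact Hle| apply meet_lb_l]).
      assert (Hl : le S a (comp S y (conv S z))) by (eapply le_trans; [exact Hle| apply meet_lb_r]).
      pose proof (ded2_nb S y (conv S z) a Hl (atom_nb S a Ha)) as Hn.
      rewrite conv_invol in Hn.
      destruct (Hat _ Hn) as [b [Hb Hbl]]. exists b. split; split; auto.
      + apply meet_glb.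
        * eapply le_trans; [exact Hbl|]. eapply le_trans; [apply meet_lb_r|].
          apply comp_mono_r; auto.
        * eapply le_trans; [exact Hbl| apply meet_lb_l].
      + eapply le_trans; [exact Hbl| apply meet_lb_r].
    - intros a a' b [Ha Hax] [Ha' Ha'x] [Hb Hba] [_ Hba'].
      assert (Hax' : le S a x) by (eapply le_trans; [exact Hax| apply meet_lb_l]).
      assert (Ha'x' : le S a' x) by (eapply le_trans; [exact Ha'x| apply meet_lb_l]).
      pose proof (ded2_nb S a' z b Hba' (atom_nb S b Hb)) as Hn.
      pose proof (atom_meet_le S a' _ Ha' Hn) as L.
      assert (L2 : le S a' (comp S a (comp S z (conv S z)))).
      { rewrite comp_assoc. eapply le_trans; [exact L|]. apply comp_mono_r. exact Hba. }
      assert (L3 : le S a' a).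
      { eapply le_trans; [apply (meet_glb S _ _ _ L2 (le_refl S a'))|].
        eapply le_trans; [apply ded1|].
        eapply le_trans; [apply comp_mono_l, meet_lb_r|].
        eapply le_trans; [apply comp_mono_l|].
        - eapply le_trans; [apply comp_mono_r, conv_mono, Hax'|].
          apply comp_mono_l, Ha'x'.
        - eapply le_trans; [apply comp_mono_l, Hu|]. rewrite comp_one_r. apply le_refl. }
      symmetry. destruct Ha as [_ Haa]. apply Haa; [apply atom_nb; auto | exact L3]. }
  assert (Hone : univalent S (one S)).
  { unfold univalent. rewrite conv_one, comp_one_l. apply le_refl. }
  assert (C5e : atomic S -> forall x y, univalent S x ->
        ele (C (meet S x (comp S y (conv S y)))) (C y)).
  { intros Hat x y Hu. eapply ele_trans; [apply (C5b Hat x y y Hu)|]. apply Hmono, meet_lb_r. }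
  split; [exact C1a|]. split.
  { intros x Hx. apply (cnt_unique (fun a => atom S a /\ le S a x)); [apply H|].
    exists (x :: nil). split; [constructor; [intros []|constructor]|split; auto].
    intros a; split.
    - intros [E|[]]. subst. split; auto. apply le_refl.
    - intros [Ha Hle]. left. symmetry. destruct Hx as [_ Hx]. apply Hx; auto. apply atom_nb; auto. }
  split; [exact C3|]. split.
  { intros x y. apply cnt_union with (P := fun a => atom S a /\ le S a x)
      (Q := fun a => atom S a /\ le S a y); try apply H.
    - eapply cnt_ext; [|apply H]. intros a; split.
      + intros [Ha Hle]. destruct (atom_le_sup S a x y Ha Hle); auto.
      + intros [[Ha Hle]|[Ha Hle]]; split; auto; eapply le_trans; eauto;
          [apply sup_ub_l | apply sup_ub_r].
    - eapply cnt_ext; [|apply H]. intros a; split.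
      + intros [Ha Hle]. split; split; auto; eapply le_trans; eauto;
          [apply meet_lb_l | apply meet_lb_r].
      + intros [[Ha Hle] [_ Hle']]. split; auto. apply meet_glb; auto. }
  split; [exact Hmono|].
  intros Hat. split.
  { intros x. split.
    - intros E. destruct (classic (x = bot S)) as [|Hx]; auto. exfalso.
      destruct (Hat x Hx) as [a [Ha Hle]]. pose proof (H x) as K. rewrite E in K.
      destruct K as [l [_ [I L]]]. destruct l; [|discriminate].
      apply (I a). auto.
    - intros ->. exact C1a. }
  split; [exact (C5a Hat)|]. split; [exact (C5b Hat)|]. split.
  { intros x y Hu. pose proof (C5a Hat x (conv S y) (top S) Hu) as K.
    rewrite meet_top, <- conv_comp, C3 in K. eapply ele_trans; [exact K|].
    eapply ele_trans; [apply Hmono, meet_lb_r|]. rewrite C3. apply ele_refl. }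
  split.
  { intros x y Hu. pose proof (C5b Hat x y (top S) Hu) as K. rewrite conv_top in K.
    eapply ele_trans; [exact K|]. apply Hmono, meet_lb_r. }
  split; [exact (C5e Hat)|]. split.
  { intros x. apply (C5e Hat (one S) x Hone). }
  { intros x. pose proof (C5e Hat (one S) (conv S x) Hone) as K.
    rewrite conv_invol, C3 in K. exact K. }
Qed.
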